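(* Let $G$ be a connected graph and $v\in V(G)$. Let $G_v$ be the graph obtained from $G$ by adding a new vertex $v'$ adjacent to $v$ and to all vertices of $N_G(v)$. For a search tree $T$ on $G$, let $P(T)=\{T(i,j)\mid i\in\{0,\ldots,d_{T,v}\},\ j\in\{1,2\}\}$. Then $\{P(T)\mid T\in V(\mathcal{R}(G))\}$ is a partition of $V(\mathcal{R}(G_v))$.
   Context: For a connected graph $G$, a search tree on $G$ is a rooted tree with vertex set $V(G)$ defined recursively: its root is some vertex $r\in V(G)$, and the children of $r$ are the roots of search trees on the connected components of $G-r$. $V(\mathcal{R}(G))$ denotes the set of search trees on $G$. For a rooted tree $T$ with root $r_T$ and $w\in V(T)$, $d_{T,w}$ is the distance from $r_T$ to $w$. Insertion: for a rooted tree $T$, $v\in V(T)$ with $d=d_{T,v}$ and root-to-$v$ path $a_0,\ldots,a_d=v$, and $x\notin V(T)$: $T(0,x,v)$ has $x$ as new root with $T$ as its only subtree; for $1\le i\le d$, $T(i,x,v)$ is obtained by subdividing the edge $a_{i-1}a_i$ by $x$. Define $T(i,1)=T(i,v',v)$, and $T(i,2)=\rho^\ast(T(i,1))$, where $\rho$ is the permutation of $V(G_v)$ swapping $v$ and $v'$ and fixing all other vertices, and $\rho^\ast(R)$ is the rooted tree with edge set $\{\rho(a)\rho(b)\mid ab\in E(R)\}$ and root $\rho(r_R)$. *)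

(* Defs.v *)
From mathcomp Require Import all_boot.
Set Implicit Arguments. Unset Strict Implicit. Unset Printing Implicit Defensive.

Section Defs.
Variable V : finType.

(* A simple graph is an edge relation e : rel V (symmetric, irreflexive).     *)
(* A rooted tree on vertex set V is represented by its parent function        *)
(* T : {ffun V -> option V} (T x = None iff x is the root).  A rooted tree    *)
(* is determined by its edge set and root, i.e. by this parent function.      *)

Definition induced (e : rel V) (S : {set V}) : rel V :=
  fun x y => [&& x \in S, y \in S & e x y].

Definition component (e : rel V) (S C : {set V}) : Prop :=
  exists2 x, x \in S & C = [set y in S | connect (induced e S) x y].

(* stree e S r t : the restriction of the parent function t to S is a search
   tree on G[S] with root r (the parent of r itself is not constrained here):
   r \in S, and the children of r are the roots of search trees on the
   connected components of G[S] - r. *)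
Inductive stree (e : rel V) (t : V -> option V) : {set V} -> V -> Prop :=
| STree (S : {set V}) (r : V) :
    r \in S ->
    (forall C : {set V}, component e (S :\ r) C ->
       exists2 c, c \in C & (t c = Some r /\ stree e t C c)) ->
    stree e t S r.

Definition search_tree (e : rel V) (T : {ffun V -> option V}) : Prop :=
  exists r, T r = None /\ stree e T setT r.

Fixpoint anc (T : V -> option V) (k : nat) (w : V) : option V :=
  match k with
  | 0 => Some w
  | k'.+1 => obind T (anc T k' w)
  end.

Fixpoint depth_aux (T : V -> option V) (n : nat) (w : V) : nat :=
  match n with
  | 0 => 0
  | n'.+1 => match T w with None => 0 | Some u => (depth_aux T n' u).+1 end
  end.

(* d_{T,w}: distance from the root of T to w. *)
Definition depth (T : V -> option V) (w : V) : nat := depth_aux T #|V| w.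

(* G_v on vertex type option V: Some x is the old vertex x, None is v'. *)
Definition Gv (e : rel V) (v : V) : rel (option V) :=
  fun a b => match a, b with
  | Some x, Some y => e x y
  | None, Some y => (y == v) || e v y
  | Some x, None => (x == v) || e v x
  | None, None => false
  end.

(* Insertion T(i, v', v) with v' = None.  The root-to-v path is
   a_j = anc T (d - j) v, d = depth T v.
   i = 0 : v' is the new root, parent of the old root a_0 becomes v'.
   i >= 1: the edge a_{i-1} a_i is subdivided by v'. *)
Definition ins (T : {ffun V -> option V}) (i : nat) (v : V)
  : {ffun option V -> option (option V)} :=
  let d := depth T v in
  [ffun y => match y with
   | None => if i is 0 then None else omap Some (anc T (d - i).+1 v)
   | Some w => if Some w == anc T (d - i) v then Some None
               else omap Some (T w)
   end].

Definition rho (v : V) (y : option V) : option V :=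
  match y with
  | None => Some v
  | Some w => if w == v then None else Some w
  end.

(* rho^*(R): the rooted tree with edges rho(a)rho(b) and root rho(r_R). *)
Definition rhostar (v : V) (R : {ffun option V -> option (option V)})
  : {ffun option V -> option (option V)} :=
  [ffun y => omap (rho v) (R (rho v y))].

Definition PT (T : {ffun V -> option V}) (v : V)
  : {set {ffun option V -> option (option V)}} :=
  [set ins T i v | i : 'I_(depth T v).+1]
  :|: [set rhostar v (ins T i v) | i : 'I_(depth T v).+1].

End Defs.

(* Main.v *)
Require Import Defs.
From mathcomp Require Import all_boot.
Set Implicit Arguments. Unset Strict Implicit. Unset Printing Implicit Defensive.

Section Gen.
Variable T : finType.

Lemma connect_ind2 (r : rel T) (x : T) (P : T -> Prop) :
  P x -> (forall a b, connect r x a -> P a -> r a b -> P b) ->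
  forall z, connect r x z -> P z.
Proof.
move=> Px step z /connectP [p pth ->].
have H: forall p a, connect r x a -> P a -> path r a p -> P (last a p).
  elim=> [|b q IH] a xa Pa //= /andP [ab pb].
  apply: IH pb; [exact: connect_trans xa (connect1 ab) | exact: step ab].
exact: H (connect0 _ _) Px pth.
Qed.

Lemma connect_inv (r : rel T) x y : connect r x y ->
  x = y \/ exists2 z, r x z & connect r z y.
Proof.
move=> /connectP [[|z p] /= pth ->]; [by left| right].
case/andP: pth => xz pz; exists z => //; apply/connectP; by exists p.
Qed.

Lemma connect_last (r : rel T) x y : connect r x y -> x != y ->
  exists2 c, r c y & connect r x c.
Proof.
move=> H; suff: y = x \/ exists2 c, r c y & connect r x c.
  by case=> [->|//]; rewrite eqxx.
apply: (connect_ind2 (P := fun z => z = x \/ exists2 c, r c z & connect r x c)) H.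
  by left.
move=> a b xa _ ab; right; by exists a.
Qed.

Lemma connect_mono (r r' : rel T) x y : (forall a b, r a b -> r' a b) ->
  connect r x y -> connect r' x y.
Proof.
move=> h; apply: (connect_ind2 (P := fun z => connect r' x z)) => //.
move=> a b _ H ab; exact: connect_trans H (connect1 (h _ _ ab)).
Qed.

Lemma connect_inv_map (f : T -> T) (r r' : rel T) : involutive f ->
  (forall a b, r' a b = r (f a) (f b)) ->
  forall a b, connect r' a b = connect r (f a) (f b).
Proof.
move=> fK hr a b; apply/idP/idP.
- move=> H; apply: (connect_ind2 (P := fun z => connect r (f a) (f z))) H => //.
  move=> a1 b1 _ H1 e1; apply: connect_trans H1 (connect1 _); by rewrite -hr.
- move=> H; rewrite -[b]fK.
  apply: (connect_ind2 (P := fun z => connect r' a (f z))) H; first by rewrite fK.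
  move=> a1 b1 _ H1 e1; apply: connect_trans H1 (connect1 _); by rewrite hr !fK.
Qed.

End Gen.

Section Trees.
Variable V : finType.
Implicit Types (t : V -> option V) (e : rel V).

Definition up t : rel V := fun x y => t x == Some y.

Lemma up_inv t x y : connect (up t) x y ->
  x = y \/ exists2 z, t x = Some z & connect (up t) z y.
Proof. by case/connect_inv => [|[z /eqP]]; [left|right; exists z]. Qed.

Lemma up1 t x y : t x = Some y -> connect (up t) x y.
Proof. by move=> h; apply: connect1; rewrite /up h. Qed.


Lemma chain t y a b : connect (up t) y a -> connect (up t) y b ->
  connect (up t) a b || connect (up t) b a.
Proof.
move=> ya yb.
apply: (connect_ind2 (P := fun z => connect (up t) z b || connect (up t) b z)) ya.
  by rewrite yb.
move=> a1 a2 _ /orP [h|h] /eqP e12.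
- case: (up_inv h) => [<-|[z hz hzb]].
    by rewrite (up1 e12) orbT.
  by move: e12; rewrite hz => -[<-]; rewrite hzb.
- by rewrite (connect_trans h (up1 e12)) orbT.
Qed.

Definition rooted t r := t r = None /\ forall y, connect (up t) y r.

Lemma root_le t a b : t b = None -> connect (up t) b a -> a = b.
Proof. by move=> hb /up_inv [->//|[z]]; rewrite hb. Qed.

Lemma no_cycle t r x x1 : rooted t r -> t x = Some x1 -> ~~ connect (up t) x1 x.
Proof.
move=> [hr hall] hx; apply/negP => hx1.
have H : forall z, connect (up t) x z -> connect (up t) z x.
  apply: connect_ind2; first exact: connect0.
  move=> a b _ ha /eqP hab; case: (up_inv ha) => [eax|[z hz hzx]].
    by subst a; move: hab; rewrite hx => /eqP; rewrite eq_sym => /eqP -[->].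
  by move: hab; rewrite hz => -[<-].
have := root_le hr (H _ (hall x)) => exr.
by move: hx; rewrite exr hr.
Qed.

Lemma antisym t r x y : rooted t r -> connect (up t) x y -> connect (up t) y x -> x = y.
Proof.
move=> hr /up_inv [//|[z hz hzy]] hyx.
by have := no_cycle hr hz; rewrite (connect_trans hzy hyx).
Qed.

Lemma no_loop t r x : rooted t r -> t x <> Some x.
Proof. by move=> hr hx; have := no_cycle hr hx; rewrite connect0. Qed.

Lemma sibling t r y c1 c2 p : rooted t r -> t c1 = Some p -> t c2 = Some p ->
  connect (up t) y c1 -> connect (up t) y c2 -> c1 = c2.
Proof.
move=> hr h1 h2 y1 y2.
have aux : forall a b, t a = Some p -> t b = Some p -> connect (up t) a b -> a = b.
  move=> a b ha hb /up_inv [//|[z hz hzb]].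
  move: hz; rewrite ha => -[ez]; subst z.
  by have := no_cycle hr hb; rewrite hzb.
case/orP: (chain y1 y2) => h; [exact: aux h | exact: esym (aux _ _ h2 h1 h)].
Qed.


Definition good e t : Prop :=
  [/\ exists r, rooted t r,
      forall x y, e x y -> connect (up t) x y || connect (up t) y x &
      forall x p, t x = Some p -> exists2 y, connect (up t) y x & e y p].

Definition D t x : {set V} := [set y | connect (up t) y x].

Lemma induced_sym e S : symmetric e -> symmetric (induced e S).
Proof. by move=> se a b; rewrite /induced andbCA se. Qed.

Lemma induced_mono e (A B : {set V}) x y : A \subset B ->
  connect (induced e A) x y -> connect (induced e B) x y.
Proof.
move=> sAB; apply: connect_mono => a b /and3P [ha hb hab].
by rewrite /induced (subsetP sAB _ ha) (subsetP sAB _ hb).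
Qed.

Arguments induced_mono {e A B x y}.

Lemma Dc_sub t r c x : rooted t r -> t c = Some x -> D t c \subset D t x :\ x.
Proof.
move=> hr hc; apply/subsetP => w; rewrite !inE => hw.
rewrite (connect_trans hw (up1 hc)) andbT; apply/eqP => ewx; subst w.
by have := no_cycle hr hc; rewrite hw.
Qed.

Lemma Dc_lt t r c x : rooted t r -> t c = Some x -> #|D t c| < #|D t x|.
Proof.
move=> hr hc; rewrite (cardsD1 x (D t x)) inE connect0 add1n ltnS.
exact: subset_leq_card (Dc_sub hr hc).
Qed.

Lemma conn_D e t : symmetric e -> good e t -> forall n z, #|D t z| <= n ->
  forall w, w \in D t z -> connect (induced e (D t z)) w z.
Proof.
move=> se [[r hr] hb hc]; elim=> [|n IH] z hz w hw.
  have: 0 < #|D t z| by apply/card_gt0P; exists z; rewrite inE connect0.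
  by rewrite ltnNge hz.
case: (eqVneq w z) => [->|wz]; first exact: connect0.
have hwz : connect (up t) w z by rewrite inE in hw.
have [c /eqP hcz hwc] := connect_last hwz wz.
have [y hyc hyz] := hc c z hcz.
have sub : D t c \subset D t z.
  by apply: subset_trans (Dc_sub hr hcz) (subsetDl _ _).
have lt : #|D t c| <= n by rewrite -ltnS; apply: leq_trans (Dc_lt hr hcz) hz.
have hw' : w \in D t c by rewrite inE.
have hy' : y \in D t c by rewrite inE.
have h1 := IH c lt w hw'.
have h2 := IH c lt y hy'.
apply: connect_trans (induced_mono sub h1) _.
rewrite (sym_connect_sym (induced_sym _ se)) in h2.
apply: connect_trans (induced_mono sub h2) (connect1 _).
rewrite /induced hyz !inE connect0 andbT.
by rewrite andbT (connect_trans hyc (up1 hcz)).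
Qed.

Lemma stree_D e t : symmetric e -> good e t -> forall n x, #|D t x| <= n ->
  stree e t (D t x) x.
Proof.
move=> se hg; have [[r hr] hb hc] := hg; elim=> [|n IH] x hx.
  have: 0 < #|D t x| by apply/card_gt0P; exists x; rewrite inE connect0.
  by rewrite ltnNge hx.
constructor; first by rewrite inE connect0.
move=> C [y hy ->]; move: (hy); rewrite !inE => /andP [yx hyx].
have [c /eqP hc' hyc] := connect_last hyx yx.
have sub := Dc_sub hr hc'.
have conc : forall z, z \in D t c -> connect (induced e (D t x :\ x)) y z.
  move=> z hz.
  have hyD : y \in D t c by rewrite inE.
  have h1 := conn_D se hg (leqnn _) hyD.
  have h2 := conn_D se hg (leqnn _) hz.
  rewrite (sym_connect_sym (induced_sym _ se)) in h2.
  exact: induced_mono sub (connect_trans h1 h2).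
have eqC : [set z in D t x :\ x | connect (induced e (D t x :\ x)) y z] = D t c.
  apply/setP => z; rewrite inE; apply/andP/idP.
  - move=> [hzD hcon]; rewrite inE.
    apply: (connect_ind2 (P := fun z => connect (up t) z c)) hcon => // a b _ hac.
    case/and3P => ha hb' hab.
    case/orP: (hb _ _ hab) => h; last exact: connect_trans h hac.
    case/orP: (chain h hac) => // hcb.
    case: (up_inv hcb) => [->|[z' hz' hzb]]; first exact: connect0.
    move: hz'; rewrite hc' => -[ez]; subst z'.
    move: hb'; rewrite !inE => /andP [bx hbx].
    by rewrite (antisym hr hzb hbx) eqxx in bx.
  - move=> hz; split; first exact: (subsetP sub).
    exact: conc.
exists c.
  by rewrite eqC inE connect0.
split => //; rewrite eqC; apply: IH.
by rewrite -ltnS; apply: leq_trans (Dc_lt hr hc') hx.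
Qed.

Lemma good_search e (t : {ffun V -> option V}) : symmetric e -> good e t -> search_tree e t.
Proof.
move=> se hg; have [[r [hr hall]] _ _] := hg; exists r; split => //.
have -> : [set: V] = D t r by apply/setP => y; rewrite !inE hall.
exact: (stree_D se hg (leqnn _)).
Qed.


Definition conn e (S : {set V}) :=
  forall x y, x \in S -> y \in S -> connect (induced e S) x y.

Lemma comp_conn e (S : {set V}) x : symmetric e ->
  conn e [set y in S | connect (induced e S) x y].
Proof.
move=> se; set C := [set y in S | _].
have H : forall z, connect (induced e S) x z -> connect (induced e C) x z.
  apply: connect_ind2; first exact: connect0.
  move=> a b xa ha /and3P [aS bS ab]; apply: connect_trans ha (connect1 _).
  by rewrite /induced !inE aS bS xa ab (connect_trans xa (connect1 _)) // /induced aS bS ab.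
move=> a b; rewrite !inE => /andP [_ ha] /andP [_ hb].
have := H _ ha; rewrite (sym_connect_sym (induced_sym _ se)) => h1.
exact: connect_trans h1 (H _ hb).
Qed.

Definition Cof e (S : {set V}) r y := [set z in S :\ r | connect (induced e (S :\ r)) y z].

Lemma stree_good e t : symmetric e -> forall n (S : {set V}) r, #|S| <= n -> conn e S ->
  stree e t S r ->
  [/\ forall y, y \in S -> connect (up t) y r,
      forall a b, a \in S -> b \in S -> e a b -> connect (up t) a b || connect (up t) b a &
      forall x p, x \in S -> x != r -> t x = Some p -> exists2 y, connect (up t) y x & e y p].
Proof.
move=> se; elim=> [|n IH] S r hS hconn hst; destruct hst as [S r hr hcomp].
  have: 0 < #|S| by apply/card_gt0P; exists r.
  by rewrite ltnNge hS.
have key : forall y, y \in S :\ r -> exists2 c, c \in Cof e S r y &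
   [/\ t c = Some r, forall z, z \in Cof e S r y -> connect (up t) z c,
      forall a b, a \in Cof e S r y -> b \in Cof e S r y -> e a b ->
         connect (up t) a b || connect (up t) b a &
      forall x p, x \in Cof e S r y -> x != c -> t x = Some p ->
         exists2 y, connect (up t) y x & e y p].
  move=> y hy.
  have [c hc [hcr hst]] := hcomp (Cof e S r y) (ex_intro2 _ _ y hy erefl).
  have hsub : Cof e S r y \subset S :\ r by apply/subsetP => z; rewrite inE => /andP [].
  have hlt : #|Cof e S r y| <= n.
    rewrite -ltnS; apply: leq_trans _ hS; apply: leq_ltn_trans (subset_leq_card hsub) _.
    by rewrite (cardsD1 r S) hr.
  have [P1 P2 P3] := IH _ _ hlt (@comp_conn e (S :\ r) y se) hst.
  by exists c.
have yC : forall y, y \in S :\ r -> y \in Cof e S r y.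
  by move=> y hy; rewrite inE hy connect0.
split.
- move=> y hy; case: (eqVneq y r) => [->|yr]; first exact: connect0.
  have hy' : y \in S :\ r by rewrite in_setD1 yr hy.
  have [c _ [hcr P1 _ _]] := key y hy'.
  exact: connect_trans (P1 _ (yC _ hy')) (up1 hcr).
- move=> a b ha hb hab.
  case: (eqVneq a r) => [->|ar].
    have P1 : forall y, y \in S -> connect (up t) y r.
      move=> y hy; case: (eqVneq y r) => [->|yr]; first exact: connect0.
      have hy' : y \in S :\ r by rewrite in_setD1 yr hy.
      have [c _ [hcr Q1 _ _]] := key y hy'.
      exact: connect_trans (Q1 _ (yC _ hy')) (up1 hcr).
    by rewrite P1 ?orbT.
  case: (eqVneq b r) => [->|br].
    have P1 : forall y, y \in S -> connect (up t) y r.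
      move=> y hy; case: (eqVneq y r) => [->|yr]; first exact: connect0.
      have hy' : y \in S :\ r by rewrite in_setD1 yr hy.
      have [c _ [hcr Q1 _ _]] := key y hy'.
      exact: connect_trans (Q1 _ (yC _ hy')) (up1 hcr).
    by rewrite P1.
  have ha' : a \in S :\ r by rewrite in_setD1 ar ha.
  have hb' : b \in S :\ r by rewrite in_setD1 br hb.
  have [c _ [_ _ P2 _]] := key a ha'.
  have hbC : b \in Cof e S r a by rewrite /Cof inE hb' /= connect1 // /induced ha' hb' hab.
  exact: P2 (yC _ ha') hbC hab.
- move=> x p hx xr hxp.
  have hx' : x \in S :\ r by rewrite in_setD1 xr hx.
  have [c hc [hcr P1 _ P3]] := key x hx'.
  case: (eqVneq x c) => [exc|xc]; last exact: P3 (yC _ hx') xc hxp.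
  subst x; move: hxp; rewrite hcr => -[<-].
  case: (boolP [exists y in Cof e S r c, e y r]).
    by case/existsP => y /andP [yC' yr]; exists y => //; exact: P1.
  move=> hno; exfalso.
  suff : r \in Cof e S r c by rewrite /Cof !inE eqxx.
  apply: (connect_ind2 (P := fun z => z \in Cof e S r c)) (hconn c r hx hr).
    exact: yC.
  move=> a b _ haC /and3P [_ hbS hab].
  have hbr : b != r.
    apply/eqP => ebr; subst b; move/existsP: hno; apply; exists a; by rewrite haC.
  move: haC; rewrite /Cof !inE => /andP [ha1 ha2].
  rewrite hbr hbS /=; apply: connect_trans ha2 (connect1 _).
  by rewrite /induced !in_setD1 ha1 hbr hbS hab.
Qed.

Lemma search_good e (t : {ffun V -> option V}) : symmetric e ->
  (forall x y, connect e x y) -> search_tree e t -> good e t.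
Proof.
move=> se hc [r [hr hst]].
have hconn : conn e [set: V].
  move=> x y _ _; rewrite (@eq_connect _ _ e) //.
  by move=> a b; rewrite /induced !inE.
have [P1 P2 P3] := stree_good se (leqnn _) hconn hst.
split.
- by exists r; split => // y; exact: P1.
- by move=> x y; apply: P2.
- move=> x p hxp; apply: (P3 x p) (hxp) => //; apply/eqP => exr; subst x; by rewrite hr in hxp.
Qed.

End Trees.

Section Anc.
Variable V : finType.
Implicit Types (t : V -> option V).

Lemma anc_add t k j x : anc t (k + j) x = obind (anc t j) (anc t k x).
Proof.
elim: j => [|j IH] /=; first by rewrite addn0; case: (anc t k x).
by rewrite addnS /= IH; case: (anc t k x).
Qed.

Lemma anc1 t j x : anc t j.+1 x = obind (anc t j) (t x).
Proof. by rewrite -add1n anc_add. Qed.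

Lemma anc_connect t k x a : anc t k x = Some a -> connect (up t) x a.
Proof.
elim: k a => [|k IH] a /=; first by move=> [->]; exact: connect0.
case h: (anc t k x) => [b|] //= hb.
exact: connect_trans (IH _ h) (up1 hb).
Qed.

Lemma path_anc t x p : path (up t) x p -> anc t (size p) x = Some (last x p).
Proof.
elim: p x => [|z p IH] x; first by [].
rewrite [path _ _ _]/= => /andP [/eqP hxz hp].
by rewrite [size _]/= anc1 hxz /= IH.
Qed.

Lemma depth_aux_eq t m x r N : anc t m x = Some r -> t r = None -> m <= N ->
  depth_aux t N x = m.
Proof.
elim: m x N => [|m IH] x N.
  by move=> [->] hr _; case: N => //= N; rewrite hr.
rewrite anc1; case hx: (t x) => [w|] //= hw hr.
case: N => // N hN /=; rewrite hx (IH w N) //.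
Qed.

Lemma depth_root t r x : rooted t r -> anc t (depth t x) x = Some r.
Proof.
move=> [hr hall]; have /connectP [p pth er] := hall x.
move: er; case/shortenP: pth => p' pth' un _ er.
have hs : size p' < #|V|.
  have := max_card (mem (x :: p')); rewrite (card_uniqP un) //.
have ha := path_anc pth'; rewrite -er in ha.
by rewrite /depth (depth_aux_eq ha hr (ltnW hs)).
Qed.

Lemma anc_le_depth t r x u : rooted t r -> connect (up t) x u ->
  exists2 k, k <= depth t x & anc t k x = Some u.
Proof.
move=> hr /connectP [p pth ->]; exists (size p); last exact: path_anc.
rewrite leqNgt; apply/negP => hlt.
have := path_anc pth; rewrite -(subnKC (ltnW hlt)) anc_add (depth_root _ hr).
case: (size p - depth t x) (subn_gt0 (depth t x) (size p)) => [|j]; first by rewrite hlt.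
by move=> _; change (anc t j.+1 r = Some (last x p) -> False); rewrite anc1 hr.1.
Qed.

End Anc.

Definition flat (V : Type) (o : option (option V)) : option V :=
  if o is Some (Some q) then Some q else None.

Section Main.
Variable V : finType.
Variable e : rel V.
Variable v : V.
Hypothesis se : symmetric e.
Hypothesis ie : irreflexive e.

Local Notation G := (Gv e v).

Definition insA (T : {ffun V -> option V}) (u : V) : {ffun option V -> option (option V)} :=
  [ffun y => match y with None => omap Some (T u)
   | Some w => if w == u then Some None else omap Some (T w) end].

Lemma insA_None T u : insA T u None = omap Some (T u).
Proof. by rewrite ffunE. Qed.
Lemma insA_u T u : insA T u (Some u) = Some None.
Proof. by rewrite ffunE eqxx. Qed.
Lemma insA_w T u w : w != u -> insA T u (Some w) = omap Some (T w).
Proof. by move=> h; rewrite ffunE (negbTE h). Qed.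

Lemma Gv_sym : symmetric G.
Proof. by move=> [a|] [b|] //=; rewrite se. Qed.

Lemma Gv_conn : (forall x y, connect e x y) -> forall a b, connect G a b.
Proof.
move=> hc.
have hs : forall x y, connect G (Some x) (Some y).
  move=> x y; apply: (connect_ind2 (P := fun z => connect G (Some x) (Some z))) (hc x y).
    exact: connect0.
  move=> a b _ h ab; exact: connect_trans h (connect1 _).
have hn : forall x, connect G None (Some x).
  move=> x; apply: connect_trans (hs v x); apply: connect1; by rewrite /= eqxx.
have hn' : forall x, connect G (Some x) None.
  by move=> x; rewrite (sym_connect_sym Gv_sym).
move=> [a|] [b|]; [exact: hs | exact: hn' | exact: hn | exact: connect0].
Qed.

Lemma rhoK : involutive (rho v).
Proof.
case=> [w|] /=; last by rewrite eqxx.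
by case: (eqVneq w v) => [->|h] /=; rewrite ?eqxx ?(negbTE h).
Qed.

Lemma Gv_rho a b : G (rho v a) (rho v b) = G a b.
Proof.
case: a b => [x|] [y|] /=.
- case: (eqVneq x v) => [->|hx]; case: (eqVneq y v) => [->|hy] /=;
    rewrite ?eqxx ?ie ?(negbTE hx) ?(negbTE hy) //= se.
- case: (eqVneq x v) => [->|hx] /=; rewrite ?eqxx ?(negbTE hx) //= se.
- case: (eqVneq y v) => [->|hy] /=; rewrite ?eqxx ?(negbTE hy) //=.
- by rewrite ie.
Qed.

Lemma up_rhostar (R : {ffun option V -> option (option V)}) a b :
  up (rhostar v R) a b = up R (rho v a) (rho v b).
Proof.
rewrite /up /rhostar ffunE; case: (R (rho v a)) => [c|] //=.
by apply/eqP/eqP => [[<-]|[->]]; rewrite rhoK.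
Qed.

Lemma connect_rhostar (R : {ffun option V -> option (option V)}) a b :
  connect (up (rhostar v R)) a b = connect (up R) (rho v a) (rho v b).
Proof. exact: (connect_inv_map rhoK (up_rhostar R)). Qed.

Lemma rhostarK (R : {ffun option V -> option (option V)}) : rhostar v (rhostar v R) = R.
Proof.
apply/ffunP => y; rewrite !ffunE rhoK; case: (R y) => //= c; by rewrite rhoK.
Qed.

Lemma good_rhostar (R : {ffun option V -> option (option V)}) : good G R -> good G (rhostar v R).
Proof.
move=> [[r [hr hall]] hb hc]; split.
- exists (rho v r); split; first by rewrite ffunE rhoK hr.
  by move=> y; rewrite connect_rhostar rhoK.
- by move=> x y hxy; rewrite !connect_rhostar; apply: hb; rewrite Gv_rho.
- move=> x p; rewrite ffunE; case hx: (R (rho v x)) => [p0|] //= [<-].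
  have [y hy hyp] := hc _ _ hx; exists (rho v y).
    by rewrite connect_rhostar rhoK.
  by rewrite Gv_rho.
Qed.

Lemma I1 (T : {ffun V -> option V}) u a b : connect (up T) b a -> connect (up (insA T u)) (Some b) (Some a).
Proof.
apply: (connect_ind2 (P := fun z => connect (up (insA T u)) (Some b) (Some z))).
  exact: connect0.
move=> a1 a2 _ h /eqP e12; apply: connect_trans h _.
case: (eqVneq a1 u) => [ea|ne].
- subst a1; apply: connect_trans (up1 (insA_u T u)) (up1 _); by rewrite insA_None e12.
- by apply: up1; rewrite insA_w // e12.
Qed.

Lemma I2 (T : {ffun V -> option V}) u b : connect (up T) b u -> connect (up (insA T u)) (Some b) None.
Proof. move=> h; exact: connect_trans (I1 u h) (up1 (insA_u T u)). Qed.

Lemma I3 (T : {ffun V -> option V}) u p a : T u = Some p -> connect (up T) p a ->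
  connect (up (insA T u)) None (Some a).
Proof.
move=> hp h; apply: connect_trans (up1 _) (I1 u h); by rewrite insA_None hp.
Qed.

Lemma good_insA (T : {ffun V -> option V}) u : good e T -> connect (up T) v u -> good G (insA T u).
Proof.
move=> [[r [hr hall]] hb hc] hvu; split.
- case: (eqVneq u r) => [eur|ne].
  + subst u; exists None; split; first by rewrite insA_None hr.
    by case=> [y|]; [exact: I2 | exact: connect0].
  + exists (Some r); split; first by rewrite insA_w ?hr // eq_sym.
    case=> [y|]; first exact: I1.
    case hu: (T u) => [p|]; last by move: ne; rewrite (root_le hu (hall u)) eqxx.
    exact: I3 hu (hall p).
- have aux : forall b, (b == v) || e v b ->
      connect (up (insA T u)) (Some b) None || connect (up (insA T u)) None (Some b).
    move=> b hb'.
    have hcmp : connect (up T) v b || connect (up T) b v.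
      case/orP: hb' => [/eqP ->|hvb]; [by rewrite connect0 | exact: hb].
    case/orP: hcmp => h.
    + case/orP: (chain hvu h) => h2; last by rewrite I2.
      case: (up_inv h2) => [eub|[z hz hzb]]; first by rewrite I2 // eub connect0.
      by rewrite (I3 hz hzb) orbT.
    + by rewrite I2 // (connect_trans h hvu).
  move=> [x|] [y|] //= hxy.
  + by case/orP: (hb _ _ hxy) => h; [rewrite (I1 u h) | rewrite (I1 u h) orbT].
  + exact: aux.
  + rewrite orbC; exact: aux.
- move=> [x|] p.
  + case: (eqVneq x u) => [exu|ne].
    * subst x; rewrite insA_u => -[<-]; exists (Some v); first exact: I1 hvu.
      by rewrite /= eqxx.
    * rewrite insA_w //; case hx: (T x) => [q|] //= [<-].
      have [y hy hyq] := hc _ _ hx; exists (Some y); [exact: I1 | exact: hyq].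
  + rewrite insA_None; case hu: (T u) => [q|] //= [<-].
    have [y hy hyq] := hc _ _ hu; exists (Some y); [exact: I2 | exact: hyq].
Qed.

Lemma Jlem (T : {ffun V -> option V}) u x y : connect (up (insA T u)) x y ->
  connect (up T) (odflt u x) (odflt u y).
Proof.
apply: (connect_ind2 (P := fun z => connect (up T) (odflt u x) (odflt u z))).
  exact: connect0.
move=> a b _ h /eqP hab; apply: connect_trans h _.
case: a hab => [a|] /=.
- case: (eqVneq a u) => [->|ne].
    by rewrite insA_u => -[<-]; exact: connect0.
  rewrite insA_w //; case hx: (T a) => [q|] //= [<-]; exact: up1.
- rewrite insA_None; case hu: (T u) => [q|] //= [<-]; exact: up1.
Qed.

Lemma splice_good (T : {ffun V -> option V}) u : good G (insA T u) -> connect (up (insA T u)) (Some v) None ->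
  good e T /\ connect (up T) v u.
Proof.
move=> [[r0 hroot] hb hc] hvn; have [hr0 hall] := hroot.
have hvu : connect (up T) v u := Jlem hvn.
split => //; split.
- case: r0 hroot hr0 hall => [r|] hroot hr0 hall.
  + exists r; split.
      case: (eqVneq r u) => [eru|ne]; first by move: hr0; rewrite eru insA_u.
      by move: hr0; rewrite insA_w //; case: (T r).
    move=> y; exact: (Jlem (hall (Some y))).
  + exists u; split; first by move: hr0; rewrite insA_None; case: (T u).
    move=> y; exact: (Jlem (hall (Some y))).
- move=> x y hxy; have := hb (Some x) (Some y) hxy.
  by case/orP => h; [rewrite (Jlem h) | rewrite (Jlem h) orbT].
- move=> x q hxq.
  case: (eqVneq x u) => [exu|ne].
  + subst x; have hN : insA T u None = Some (Some q) by rewrite insA_None hxq.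
    have [y hy hyq] := hc _ _ hN.
    case: y hy hyq => [y|] hy hyq.
    * exists y; [exact: (Jlem hy) | exact: hyq].
    * move: hyq => /= /orP [/eqP eqv|hvq].
      -- subst q; by have := no_cycle hroot hN; rewrite hvn.
      -- exists v; [exact: (Jlem hvn) | exact: hvq].
  + have hS : insA T u (Some x) = Some (Some q) by rewrite insA_w // hxq.
    have [y hy hyq] := hc _ _ hS.
    case: y hy hyq => [y|] hy hyq.
    * exists y; [exact: (Jlem hy) | exact hyq].
    * move: hyq => /= /orP [/eqP eqv|hvq].
      -- subst q; by have := no_cycle hroot hS; rewrite (connect_trans hvn hy).
      -- exists v; [exact: (Jlem (connect_trans hvn hy)) | exact hvq].
Qed.

Lemma splice_ex (R : {ffun option V -> option (option V)}) : good G R -> connect (up R) (Some v) None ->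
  exists T, exists u, R = insA T u /\ good e T /\ connect (up T) v u.
Proof.
move=> hg hvn; have [[r0 hr0] hb hc] := hg.
have hne : Some v != None by [].
have [c /eqP hcN hvc] := connect_last hvn hne.
case: c hcN hvc => [u|] hu hvu; last by have := no_loop hr0 hu.
have huniq : forall w, R (Some w) = Some None -> w = u.
  move=> w hw; have [y hy hyN] := hc _ _ hw.
  case: y hy hyN => [y|] hy hyN; last by have := no_cycle hr0 hw; rewrite hy.
  have [z hzw hzu] : exists2 z, connect (up R) z (Some w) & connect (up R) z (Some u).
    move: hyN => /= /orP [/eqP eyv|hvy].
    - subst y; by exists (Some v).
    - have : G (Some v) (Some y) by [].
      move=> /hb /orP [h|h].
      + exists (Some v) => //; exact: connect_trans h hy.
      + exists (Some y) => //; exact: connect_trans h hvu.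
  by case: (sibling hr0 hw hu hzw hzu).
pose T : {ffun V -> option V} :=
  [ffun w => flat (if R (Some w) == Some None then R None else R (Some w))].
have hRN : R None <> Some None := no_loop hr0 (x:=None).
have eqR : R = insA T u.
  apply/ffunP => -[w|].
  - case: (eqVneq w u) => [->|ne]; first by rewrite insA_u.
    rewrite insA_w // ffunE.
    have hw : R (Some w) != Some None.
      by apply/eqP => /huniq ewu; rewrite ewu eqxx in ne.
    rewrite (negbTE hw); move: hw; case: (R (Some w)) => [[q|]|] //=.
  - rewrite insA_None ffunE hu eqxx; move: hRN; case: (R None) => [[q|]|] //=.
exists T, u; split => //.
rewrite eqR in hg hvn; exact: splice_good hg hvn.
Qed.

Lemma insA_inj T1 u1 T2 u2 : insA T1 u1 = insA T2 u2 -> T1 = T2.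
Proof.
have key : forall (T : {ffun V -> option V}) u w, T w =
    flat (if insA T u (Some w) == Some None then insA T u None else insA T u (Some w)).
  move=> T u w; case: (eqVneq w u) => [->|ne].
    by rewrite insA_u eqxx insA_None; case: (T u).
  by rewrite insA_w //; case: (T w).
move=> h; apply/ffunP => w; by rewrite (key T1 u1 w) h -(key T2 u2 w).
Qed.

Lemma ins_insA (T : {ffun V -> option V}) r i u : rooted T r -> anc T (depth T v - i) v = Some u ->
  ins T i v = insA T u.
Proof.
move=> hr ha; apply/ffunP => -[w|]; rewrite /ins !ffunE /=.
- by rewrite ha.
- case: i ha => [|i] ha.
  + rewrite subn0 (depth_root v hr) in ha; case: ha => <-; by rewrite hr.1.
  + by rewrite ha.
Qed.

Lemma PT_char (T : {ffun V -> option V}) r (R : {ffun option V -> option (option V)}) : rooted T r -> (R \in PT T v) <->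
  exists2 u, connect (up T) v u & (R = insA T u \/ R = rhostar v (insA T u)).
Proof.
move=> hr; split.
- have aux : forall i : 'I_(depth T v).+1,
      exists2 u, connect (up T) v u & ins T i v = insA T u.
    move=> i; have hi : (i <= depth T v) by rewrite -ltnS ltn_ord.
    have hd : anc T ((depth T v - i) + i) v = Some r by rewrite subnK // (depth_root v hr).
    case hu: (anc T (depth T v - i) v) => [u|]; last by rewrite anc_add hu in hd.
    exists u; [exact: anc_connect hu | exact: ins_insA hr hu].
  rewrite /PT inE; case/orP => H; case/imsetP: H => i _ ->; have [u hu hE] := aux i;
    exists u => //; [left|right]; by rewrite hE.
- move=> [u hvu hR]; have [k hk hak] := anc_le_depth hr hvu.
  have hlt : depth T v - k < (depth T v).+1 by rewrite ltnS leq_subr.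
  have eqi : ins T (depth T v - k) v = insA T u.
    by apply: ins_insA hr _; rewrite subKn.
  rewrite /PT inE; case: hR => ->; apply/orP; [left|right]; apply/imsetP;
    exists (Ordinal hlt) => //=; by rewrite eqi.
Qed.

Lemma main_aux : (forall x y, connect e x y) ->
  [/\ (forall T, search_tree e T ->
          PT T v != set0 /\ (forall R, R \in PT T v -> search_tree G R)),
      (forall R, search_tree G R ->
          exists2 T, search_tree e T & R \in PT T v)
    & (forall T1 T2, search_tree e T1 -> search_tree e T2 ->
          PT T1 v != PT T2 v -> [disjoint PT T1 v & PT T2 v])].
Proof.
move=> hc.
have sG := Gv_sym.
have cG := Gv_conn hc.
split.
- move=> T hT; have hg := search_good se hc hT; have [[r hr] _ _] := hg.
  split.
  + apply/set0Pn; exists (ins T 0 v); rewrite /PT inE; apply/orP; left.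
    by apply/imsetP; exists ord0.
  + move=> R /(PT_char _ hr) [u hvu [->|->]]; apply: good_search sG _.
    * exact: good_insA.
    * exact: good_rhostar (good_insA hg hvu).
- move=> R hR; have hg := search_good sG cG hR; have [[r0 hr0] hb _] := hg.
  have : G (Some v) None by rewrite /= eqxx.
  move/hb => /orP [h|h].
  + have [T [u [eR [hgT hvu]]]] := splice_ex hg h.
    exists T; first exact: good_search se hgT.
    have [[r hr] _ _] := hgT.
    apply/(PT_char _ hr); exists u => //; by left.
  + have hg' := good_rhostar hg.
    have h' : connect (up (rhostar v R)) (Some v) None.
      by rewrite connect_rhostar /= eqxx.
    have [T [u [eR [hgT hvu]]]] := splice_ex hg' h'.
    exists T; first exact: good_search se hgT.
    have [[r hr] _ _] := hgT.
    apply/(PT_char _ hr); exists u => //; right; by rewrite -eR rhostarK.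
- move=> T1 T2 h1 h2 hne; rewrite disjoints_subset; apply/subsetP => R hR1; rewrite inE; apply/negP => hR2.
  have g1 := search_good se hc h1; have g2 := search_good se hc h2.
  have [[r1 hr1] _ _] := g1; have [[r2 hr2] _ _] := g2.
  move/(PT_char _ hr1): hR1 => [u1 hu1 H1].
  move/(PT_char _ hr2): hR2 => [u2 hu2 H2].
  suff eT : T1 = T2 by rewrite eT eqxx in hne.
  have gi2 := good_insA g2 hu2; have [[q2 hq2] _ _] := gi2.
  have gi1 := good_insA g1 hu1; have [[q1 hq1] _ _] := gi1.
  case: H1 H2 => -> [E|E].
  + exact: insA_inj E.
  + have c1 := I2 hu1.
    rewrite E connect_rhostar /= eqxx in c1.
    by have := antisym hq2 c1 (I2 hu2).
  + have c2 := I2 hu2.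
    rewrite -E connect_rhostar /= eqxx in c2.
    by have := antisym hq1 c2 (I2 hu1).
  + have := congr1 (rhostar v) E; rewrite !rhostarK => E'; exact: insA_inj E'.
Qed.

End Main.

Theorem proposition2p7 (V : finType) (e : rel V) (v : V) :
  symmetric e -> irreflexive e -> (forall x y, connect e x y) ->
  [/\ (forall T, search_tree e T ->
          PT T v != set0 /\ (forall R, R \in PT T v -> search_tree (Gv e v) R)),
      (forall R, search_tree (Gv e v) R ->
          exists2 T, search_tree e T & R \in PT T v)
    & (forall T1 T2, search_tree e T1 -> search_tree e T2 ->
          PT T1 v != PT T2 v -> [disjoint PT T1 v & PT T2 v])].
Proof.
move=> se ie hc; exact: (main_aux v se ie hc).
Qed.
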